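(* For every finite set $U$ in a commutative group $G$, \[ \alpha(U)\le\beta(U),\quad \alpha'(U)\le4\beta'(U),\quad \alpha''(U)\le3\beta''(U), \] \[ \beta(U)\le\alpha(U)^2,\quad \beta''(U)\le\alpha(U)^3, \] \[ \alpha''(U)\le\alpha(U)^2,\quad \beta''(U)\le\beta''(2U)\le\beta(U)^2, \] where $2U=U+U$.
   Context: With $A,B$ ranging over nonempty finite subsets of $G$: $\alpha(U)=\inf_{A\supset U,B\supset U}\frac{|A+B|}{\sqrt{|A||B|}}$; $\alpha'(U)=\inf_{A\supset U,B\supset U,|A|=|B|}\frac{|A+B|}{|A|}$; $\alpha''(U)=\inf_{A\supset U}\frac{|A+A|}{|A|}$; $\beta(U)=\inf_{A,B}\frac{|A+B+U|}{\sqrt{|A||B|}}$; $\beta'(U)=\inf_{A,B,|A|=|B|}\frac{|A+B+U|}{\sqrt{|A||B|}}$; $\beta''(U)=\inf_A\frac{|A+A+U|}{|A|}$. *)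

(* Defs.v *)
From HB Require Import structures.
From mathcomp Require Import all_boot all_order all_algebra.
From mathcomp Require Import finmap.
From mathcomp Require Import boolp classical_sets reals.
Set Implicit Arguments. Unset Strict Implicit. Unset Printing Implicit Defensive.
Import Order.TTheory GRing.Theory Num.Theory.
Local Open Scope ring_scope.
Local Open Scope fset_scope.

Section Defs.
Variables (R : realType) (G : zmodType).

Definition sumset (A B : {fset G}) : {fset G} := [fset (a + b)%R | a in A, b in B].

Definition cardR (A : {fset G}) : R := (#|` A|)%:R.

Definition alpha (U : {fset G}) : R :=
  inf [set r : R | exists A B : {fset G}, [/\ A != fset0, B != fset0,
     U `<=` A, U `<=` B & r = cardR (sumset A B) / Num.sqrt (cardR A * cardR B)]].

Definition alpha' (U : {fset G}) : R :=
  inf [set r : R | exists A B : {fset G}, [/\ A != fset0, B != fset0,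
     U `<=` A, U `<=` B & #|` A| = #|` B| /\ r = cardR (sumset A B) / cardR A]].

Definition alpha'' (U : {fset G}) : R :=
  inf [set r : R | exists A : {fset G}, [/\ A != fset0,
     U `<=` A & r = cardR (sumset A A) / cardR A]].

Definition beta (U : {fset G}) : R :=
  inf [set r : R | exists A B : {fset G}, [/\ A != fset0, B != fset0
     & r = cardR (sumset (sumset A B) U) / Num.sqrt (cardR A * cardR B)]].

Definition beta' (U : {fset G}) : R :=
  inf [set r : R | exists A B : {fset G}, [/\ A != fset0, B != fset0,
     #|` A| = #|` B|
     & r = cardR (sumset (sumset A B) U) / Num.sqrt (cardR A * cardR B)]].

Definition beta'' (U : {fset G}) : R :=
  inf [set r : R | exists A : {fset G},
     A != fset0 /\ r = cardR (sumset (sumset A A) U) / cardR A].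

End Defs.

(* Main.v *)
Require Import Defs.
From HB Require Import structures.
From mathcomp Require Import all_boot all_order all_algebra.
From mathcomp Require Import finmap.
From mathcomp Require Import boolp classical_sets reals.
From mathcomp Require Import zify ring lra.
Import Order.TTheory GRing.Theory Num.Theory.
Local Open Scope ring_scope.
Local Open Scope fset_scope.
Section S. Local Open Scope nat_scope.
Lemma ar1 {N x k a s} : (0 < x)%N -> (N * x <= k * k)%N -> (k * a <= s * x)%N ->
  (N * (a * a) <= s * s * x)%N.
Proof.
move=> x0 h1 h2.
have e1 : (N * x * (a * a) <= (k * a) * (k * a))%N.
  have := leq_mul h1 (leqnn (a * a)); nia.
have e2 : ((k * a) * (k * a) <= (s * x) * (s * x))%N by apply: leq_mul.
rewrite -(leq_pmul2r x0).
have -> : (N * (a * a) * x = N * x * (a * a))%N by ring.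
apply: (leq_trans e1); apply: (leq_trans e2).
have -> : (s * x * (s * x) = s * s * x * x)%N by ring.
by [].
Qed.

Lemma ar6 {N x a s} : (0 < a)%N -> (x <= a)%N -> (N * (a * a) <= s * s * x)%N ->
  (N * a <= s * s)%N.
Proof.
move=> a0 hx h; rewrite -(leq_pmul2r a0).
apply: leq_trans (_ : _ <= s * s * x)%N _; first by rewrite -mulnA.
by rewrite leq_mul2l hx orbT.
Qed.

Lemma ar4 {N x a b s} : (0 < a)%N -> (x <= a)%N -> (b <= a)%N ->
  (N * (a * a) <= s * s * x)%N ->
  (N * N * (a * a) * b <= s * s * (s * s) * x)%N.
Proof.
move=> a0 hx hb h.
have aa0 : (0 < a * a)%N by rewrite muln_gt0 a0.
rewrite -(leq_pmul2r aa0).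
have e1 := leq_mul h h.
have e2 := leq_mul e1 (leqnn b).
have e3 : (x * b <= a * a)%N by apply: leq_mul.
have e4 := leq_mul (leqnn (s * s * (s * s) * x)) e3.
have -> : (N * N * (a * a) * b * (a * a) = N * (a * a) * (N * (a * a)) * b)%N by ring.
apply: (leq_trans e2).
have -> : (s * s * x * (s * s * x) * b = s * s * (s * s) * x * (x * b))%N by ring.
exact: e4.
Qed.

Lemma ar5 {N x k a s} : (0 < x)%N -> (0 < a)%N -> (x <= a)%N ->
  (N * (x * x) <= k * k * k)%N -> (k * a <= s * x)%N ->
  (N * (a * a) <= s * s * s)%N.
Proof.
move=> x0 a0 hx h1 h2.
have e1 := leq_mul h1 (leqnn (a * a * a)).
have e2 := leq_mul (leq_mul h2 h2) h2.
have e3 : (N * (a * a * a) * (x * x) <= s * s * s * x * (x * x))%N.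
  have -> : (N * (a * a * a) * (x * x) = N * (x * x) * (a * a * a))%N by ring.
  apply: (leq_trans e1).
  have -> : (k * k * k * (a * a * a) = k * a * (k * a) * (k * a))%N by ring.
  apply: (leq_trans e2).
  have -> : (s * x * (s * x) * (s * x) = s * s * s * x * (x * x))%N by ring.
  by [].
have xx0 : (0 < x * x)%N by rewrite muln_gt0 x0.
rewrite leq_pmul2r // in e3.
rewrite -(leq_pmul2r a0).
apply: leq_trans (_ : _ <= s * s * s * x)%N _; first by rewrite -mulnA.
by rewrite leq_mul2l hx orbT.
Qed.
End S.
Section Comb.
Variable G : zmodType.
Implicit Types A B C D X Y Z W T : {fset G}.
Local Open Scope ring_scope.

Lemma sumsetP A B x :
  reflect (exists a b, [/\ a \in A, b \in B & x = a + b]) (x \in sumset A B).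
Proof.
apply: (iffP (imfset2P _ _ _ _ _)) => [[a ha [b hb ->]]|[a [b [ha hb ->]]]].
  by exists a, b.
by exists a => //; exists b.
Qed.

Lemma mem_sumset A B a b : a \in A -> b \in B -> a + b \in sumset A B.
Proof. by move=> ha hb; apply/sumsetP; exists a, b. Qed.

Lemma sumsetC A B : sumset A B = sumset B A.
Proof.
apply/fsetP => x; apply/sumsetP/sumsetP => -[a [b [ha hb ->]]];
  by exists b, a; split => //; rewrite addrC.
Qed.

Lemma sumsetA A B C : sumset A (sumset B C) = sumset (sumset A B) C.
Proof.
apply/fsetP => x; apply/sumsetP/sumsetP.
  move=> [a [y [ha /sumsetP[b [c [hb hc ->]]] ->]]].
  by exists (a + b), c; split; [exact: mem_sumset | by [] | rewrite addrA].
move=> [y [c [/sumsetP[a [b [ha hb ->]]] hc ->]]].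
by exists a, (b + c); split; [by [] | exact: mem_sumset | rewrite addrA].
Qed.

Lemma sumsetS A A' B B' : A `<=` A' -> B `<=` B' -> sumset A B `<=` sumset A' B'.
Proof.
move=> /fsubsetP hA /fsubsetP hB; apply/fsubsetP => x /sumsetP[a [b [ha hb ->]]].
by apply: mem_sumset; [apply: hA | apply: hB].
Qed.

Lemma sumset0r A : sumset A fset0 = fset0.
Proof.
apply/fsetP => x; rewrite inE; apply/negbTE/negP => /sumsetP[a [b [_]]].
by rewrite inE.
Qed.

Lemma sumsetUr A B C : sumset A (B `|` C) = sumset A B `|` sumset A C.
Proof.
apply/fsetP => x; rewrite inE; apply/sumsetP/orP.
  move=> [a [b [ha]]]; rewrite inE => /orP[hb|hc] ->.
    by left; apply: mem_sumset.
  by right; apply: mem_sumset.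
by case=> /sumsetP[a [b [ha hb ->]]]; exists a, b; split => //; rewrite inE hb ?orbT.
Qed.

Definition shift A t := [fset a + t | a in A].

Lemma mem_shift A t x : (x \in shift A t) = (x - t \in A).
Proof.
apply/imfsetP/idP => [[a ha ->]|h]; first by rewrite addrK.
by exists (x - t) => //; rewrite subrK.
Qed.

Lemma card_shift A t : #|` shift A t| = #|` A|.
Proof. by apply: card_in_imfset => x y _ _ /addIr. Qed.

Lemma sumset1 A t : sumset A [fset t] = shift A t.
Proof.
apply/fsetP => x; rewrite mem_shift; apply/sumsetP/idP.
  by move=> [a [b [ha]]]; rewrite inE => /eqP -> ->; rewrite addrK.
by move=> h; exists (x - t), t; rewrite inE eqxx subrK.
Qed.

Lemma shift_sumset A B t : sumset (shift A t) B = shift (sumset A B) t.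
Proof.
apply/fsetP => x; rewrite mem_shift; apply/sumsetP/sumsetP.
  move=> [a [b [ha hb ->]]]; rewrite mem_shift in ha.
  by exists (a - t), b; split => //; rewrite addrAC.
move=> [a [b [ha hb e]]]; exists (a + t), b; split => //.
  by rewrite mem_shift addrK.
by rewrite addrAC -e subrK.
Qed.

Lemma sumset_shift A B t : sumset A (shift B t) = shift (sumset A B) t.
Proof. by rewrite sumsetC shift_sumset sumsetC. Qed.

Lemma shiftS A B t : A `<=` B -> shift A t `<=` shift B t.
Proof. by move=> /fsubsetP h; apply/fsubsetP => x; rewrite !mem_shift => /h. Qed.

Lemma sumset_neq0 A B : A != fset0 -> B != fset0 -> sumset A B != fset0.
Proof.
move=> /fset0Pn[a ha] /fset0Pn[b hb]; apply/fset0Pn; exists (a + b).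
exact: mem_sumset.
Qed.

Lemma shift_sub_sumset A B b : b \in B -> shift A b `<=` sumset A B.
Proof.
move=> hb; apply/fsubsetP => x; rewrite mem_shift => h.
by rewrite -(subrK b x); apply: mem_sumset.
Qed.

Lemma card_sumset_gel A B : B != fset0 -> (#|` A| <= #|` sumset A B|)%N.
Proof.
move=> /fset0Pn[b hb]; rewrite -(card_shift A b).
exact/fsubset_leq_card/shift_sub_sumset.
Qed.

Lemma card_sumset_ger A B : A != fset0 -> (#|` B| <= #|` sumset A B|)%N.
Proof. by move=> h; rewrite sumsetC; apply: card_sumset_gel. Qed.

Lemma card_sumset_le A B : (#|` sumset A B| <= #|` A| * #|` B|)%N.
Proof.
elim/fset1U_rect: B => [|b B hb IH]; first by rewrite sumset0r cardfs0 muln0.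
rewrite sumsetUr sumset1 cardfsU1 hb /= cardfsU card_shift.
by rewrite mulnS (leq_trans (leq_subr _ _)) // leq_add2l.
Qed.
Definition rle C X Y := (#|` sumset X C| * #|` Y| <= #|` sumset Y C| * #|` X|)%N.

Lemma petridis_min C A : A != fset0 -> exists X, [/\ X `<=` A, X != fset0,
  rle C X A & forall Y, Y `<=` X -> Y != fset0 -> rle C X Y].
Proof.
elim/finSet_rect: A => A IH hA.
have [H|H] := pselect (forall Y, Y `<=` A -> Y != fset0 -> rle C A Y).
  by exists A; split => //; rewrite /rle.
have [Y] : exists Y, ~ (Y `<=` A -> Y != fset0 -> rle C A Y).
  apply: contrapT => hn; apply: H => Y hYA hY0; apply: contrapT => hc.
  by apply: hn; exists Y => h; apply: hc; exact: h hYA hY0.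
move=> /not_implyP[hYA /not_implyP[hY0 /negP]]; rewrite /rle -ltnNge => hlt.
have hYpA : Y `<` A.
  rewrite fproperEneq hYA andbT; apply/eqP => e; subst Y.
  by rewrite ltnn in hlt.
have [X [hXY hX0 hXYr hmin]] := IH Y hYpA hY0.
exists X; split => //; first exact: fsubset_trans hXY hYA.
have y0 : (0 < #|` Y|)%N by rewrite cardfs_gt0.
move: hXYr; rewrite /rle => h1.
rewrite -(leq_pmul2r y0).
have := ltnW hlt => h2.
have e1 := leq_mul h1 (leqnn #|` A|).
have e2 := leq_mul h2 (leqnn #|` X|).
move: e1 e2; set a := #|` A|; set x := #|` X|; set y := #|` Y|.
set kx := #|` sumset X C|; set ky := #|` sumset Y C|; set ka := #|` sumset A C|.
move=> e1 e2.
apply: (leq_trans (_ : _ <= ky * x * a)%N); first by rewrite mulnAC.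
by rewrite mulnAC (leq_trans e2) // mulnAC.
Qed.
Lemma petridis C X : X != fset0 ->
  (forall Y, Y `<=` X -> Y != fset0 -> rle C X Y) ->
  forall D, (#|` sumset (sumset X C) D| * #|` X| <=
             #|` sumset X C| * #|` sumset X D|)%N.
Proof.
move=> hX hmin; elim/fset1U_rect => [|d D hd IH].
  by rewrite !sumset0r cardfs0.
set Y := [fset y in X | shift (shift C y) d `<=` sumset (sumset X C) D].
set Y' := [fset y in X | y + d \in sumset X D].
have hYX : Y `<=` X by apply/fsubsetP => y; rewrite !inE => /andP[].
have hY'Y : Y' `<=` Y.
  apply/fsubsetP => y; rewrite !inE => /andP[hy /sumsetP[x' [d' [hx' hd' e]]]].
  rewrite hy /=; apply/fsubsetP => z; rewrite !mem_shift => hz.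
  apply/sumsetP; exists (x' + (z - d - y)), d'; split => //.
    exact: mem_sumset.
  by rewrite addrAC -e addrC addrA subrK subrK.
have hY'X : Y' `<=` X := fsubset_trans hY'Y hYX.
have hYCk : (#|` sumset Y C| <= #|` sumset X C|)%N.
  exact/fsubset_leq_card/sumsetS.
have cardL : (#|` sumset (sumset X C) (d |` D)| + #|` sumset Y C| <=
              #|` sumset (sumset X C) D| + #|` sumset X C|)%N.
  have sub : sumset (sumset X C) (d |` D) `<=` sumset (sumset X C) D `|`
       (shift (sumset X C) d `\` shift (sumset Y C) d).
    apply/fsubsetP => z /sumsetP[w [e [hw]]]; rewrite !inE => /orP[/eqP ->|he] ->.
      have [hz|hz] := boolP (w + d \in shift (sumset Y C) d).
        rewrite mem_shift addrK in hz.
        move: hz => /sumsetP[y [c [hy hc ew]]].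
        move: hy; rewrite !inE => /andP[_ /fsubsetP hsub].
        apply/orP; left; apply: hsub.
        by rewrite ew !mem_shift addrK (addrC y c) addrK.
      by rewrite /= mem_shift addrK hw orbT.
    by rewrite mem_sumset.
  have := fsubset_leq_card sub; rewrite cardfsU cardfsDS ?shiftS ?sumsetS //.
  rewrite !card_shift => h.
  apply: (leq_trans (leq_add h (leqnn _))).
  lia.
have cardR : (#|` sumset X D| + #|` X| <= #|` sumset X (d |` D)| + #|` Y'|)%N.
  have sub : sumset X D `|` shift (X `\` Y') d `<=` sumset X (d |` D).
    apply/fsubsetP => z; rewrite inE => /orP[/sumsetP[x [e [hx he ->]]]|].
      by apply: mem_sumset; rewrite // !inE he orbT.
    rewrite mem_shift inE => /andP[_ hx].
    by rewrite -(subrK d z); apply: mem_sumset; rewrite // !inE eqxx.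
  have disj : sumset X D `&` shift (X `\` Y') d = fset0.
    apply/fsetP => z; rewrite !inE mem_shift; apply/negbTE.
    apply/negP => /andP[hz]; rewrite !inE => /andP[/negP hn hx].
    by apply: hn; rewrite hx subrK hz.
  have := fsubset_leq_card sub; rewrite cardfsU disj cardfs0 subn0.
  rewrite card_shift cardfsDS // => h.
  have := fsubset_leq_card hY'X; lia.
have hmY : (#|` Y| * #|` sumset X C| <= #|` sumset Y C| * #|` X|)%N.
  have [->|hY0] := eqVneq Y fset0; first by rewrite cardfs0.
  by have := hmin Y hYX hY0; rewrite /rle mulnC.
have hyy : (#|` Y'| <= #|` Y|)%N := fsubset_leq_card hY'Y.
move: IH cardL cardR hmY hyy hYCk.
set L := #|` sumset (sumset X C) (d |` D)|.
set M := #|` sumset (sumset X C) D|.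
set P := #|` sumset X D|; set P' := #|` sumset X (d |` D)|.
set k := #|` sumset X C|; set x := #|` X|; set y := #|` Y|; set y' := #|` Y'|.
set yc := #|` sumset Y C|.
move=> IH cL cR hm hyy hyc.
nia.
Qed.

Lemma petridis_full A C : A != fset0 -> exists X, [/\ X `<=` A, X != fset0,
  (#|` sumset X C| * #|` A| <= #|` sumset A C| * #|` X|)%N &
  forall D, (#|` sumset (sumset X C) D| * #|` X| <=
             #|` sumset X C| * #|` sumset X D|)%N].
Proof.
move=> hA; have [X [hXA hX0 hr hmin]] := petridis_min C A hA.
by exists X; split => //; apply: petridis hX0 hmin.
Qed.
Lemma between Z V m : Z `<=` V -> (#|` Z| <= m)%N -> (m <= #|` V|)%N ->
  exists Z', [/\ Z `<=` Z', Z' `<=` V & #|` Z'| = m].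
Proof.
move=> hZV h1 h2; have [n hn] : exists n, n = (m - #|` Z|)%N by exists (m - #|` Z|)%N.
elim: n Z hZV h1 hn => [|n IH] Z hZV h1 hn.
  by exists Z; split => //; apply/eqP; rewrite eqn_leq h1 -subn_eq0 -hn.
have hlt : (#|` Z| < #|` V|)%N by lia.
have [v hvV hvZ] : exists2 v, v \in V & v \notin Z.
  apply: contrapT => hn'.
  have : V `<=` Z.
    apply/fsubsetP => x hx; apply: contrapT => hxZ; apply: hn'.
    by exists x => //; apply/negP.
  move/fsubset_leq_card; lia.
have := IH (v |` Z); rewrite cardfsU1 hvZ /= => IH'.
have [|||Z' [h1' h2' h3']] := IH'.
- by rewrite fsubUset fsub1set hvV hZV.
- by rewrite add1n -subn_gt0 -hn.
- by rewrite add1n subnS -hn.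
by exists Z'; split => //; apply: fsubset_trans h1'; apply: fsubsetU1.
Qed.

Lemma pad Z m : Z != fset0 -> (#|` Z| <= m)%N ->
  (exists F : {fset G}, forall g, g \in F) \/
  exists T Z', [/\ Z `<=` Z', Z' `<=` sumset Z T, #|` Z'| = m &
                  (#|` T| * #|` Z| <= 2 * m)%N].
Proof.
move=> hZ hm.
have [h|hinf] := pselect (exists F : {fset G}, forall g, g \in F); first by left.
right.
have claim : forall k, exists T, [/\ 0 \in T, #|` T| = k.+1 &
                          #|` sumset Z T| = (k.+1 * #|` Z|)%N].
  elim => [|k [T [h0 hT hZT]]].
    exists [fset 0]; rewrite inE eqxx cardfs1 sumset1 card_shift mul1n.
    by split.
  pose F := sumset (sumset Z T) [fset - z | z in Z].
  have [t htF] : exists t, t \notin F.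
    apply: contrapT => hn; apply: hinf; exists F => g.
    by apply: contrapT => hg; apply: hn; exists g; apply/negP.
  have htT : t \notin T.
    apply: contra htF => ht; move: hZ => /fset0Pn[z hz].
    rewrite -(addrK z t) (addrC t z); apply: mem_sumset; first exact: mem_sumset.
    by apply/imfsetP; exists z.
  have disj : shift Z t `&` sumset Z T = fset0.
    apply/fsetP => x; rewrite !inE mem_shift; apply/negbTE/negP => /andP[hx hxT].
    move/negP: htF; apply.
    have -> : t = x + - (x - t) by rewrite opprB addrC subrK.
    apply: mem_sumset => //.
    by apply/imfsetP; exists (x - t).
  exists (t |` T); split.
  - by rewrite !inE h0 orbT.
  - by rewrite cardfsU1 htT hT.
  - rewrite sumsetUr sumset1 cardfsU disj cardfs0 subn0 card_shift hZT.
    by rewrite mulSn.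
have z0 : (0 < #|` Z|)%N by rewrite cardfs_gt0.
have [T [h0 hT hZT]] := claim (m %/ #|` Z|)%N.
have hZsub : Z `<=` sumset Z T.
  by apply/fsubsetP => z hz; rewrite -(addr0 z); apply: mem_sumset.
have hceil := ltn_ceil m z0.
have htr := leq_trunc_div m #|` Z|.
have hmT : (m <= #|` sumset Z T|)%N by rewrite hZT; lia.
have [Z' [h1 h2 h3]] := between Z (sumset Z T) m hZsub hm hmT.
exists T, Z'; split => //.
rewrite hT; lia.
Qed.
Lemma shift_contain X U x0 : x0 \in X -> U `<=` shift (sumset X U) (- x0).
Proof.
move=> hx; apply/fsubsetP => u hu; rewrite mem_shift opprK addrC.
exact: mem_sumset.
Qed.

Lemma card_sumset_shift Z W s t :
  #|` sumset (shift Z s) (shift W t)| = #|` sumset Z W|.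
Proof. by rewrite shift_sumset sumset_shift !card_shift. Qed.

Lemma sumset_swapU X Y U :
  sumset (sumset X U) (sumset Y U) = sumset (sumset X (sumset Y U)) U.
Proof. by rewrite -sumsetA (sumsetC U) sumsetA. Qed.

Lemma half A B U : A != fset0 -> exists X, [/\ X `<=` A, X != fset0 &
  forall Y, Y `<=` B ->
   (#|` sumset (sumset X U) (sumset Y U)| * #|` A| <=
    #|` sumset (sumset A B) U| * #|` sumset X U|)%N].
Proof.
move=> hA; have [X [hXA hX0 hr hP]] := petridis_full A (sumset B U) hA.
exists X; split => // Y hYB.
rewrite sumset_swapU.
have h1 : (#|` sumset (sumset X (sumset Y U)) U| <=
           #|` sumset (sumset X (sumset B U)) U|)%N.
  apply: fsubset_leq_card; apply: sumsetS; last exact: fsubset_refl.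
  apply: sumsetS; first exact: fsubset_refl.
  by apply: sumsetS; last exact: fsubset_refl.
have h2 := hP U.
move: hr; rewrite [sumset A (sumset B U)]sumsetA => hr.
have x0 : (0 < #|` X|)%N by rewrite cardfs_gt0.
rewrite -(leq_pmul2r x0).
move: h1 h2 hr.
set n1 := #|` sumset (sumset X (sumset Y U)) U|.
set n2 := #|` sumset (sumset X (sumset B U)) U|.
set k := #|` sumset X (sumset B U)|.
set s := #|` sumset (sumset A B) U|.
set a := #|` A|; set x := #|` X|; set xu := #|` sumset X U|.
move=> h1 h2 hr.
have e1 : (n1 * a * x <= n2 * x * a)%N by rewrite mulnAC leq_mul2r leq_mul2r h1 !orbT.
have e2 : (n2 * x * a <= k * xu * a)%N by rewrite leq_mul2r h2 orbT.
have e3 : (k * xu * a <= s * x * xu)%N by rewrite mulnAC leq_mul2r hr orbT.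
apply: (leq_trans e1); apply: (leq_trans e2); rewrite [(s * xu * x)%N]mulnAC; exact: e3.
Qed.

Lemma key12 A B U : A != fset0 -> B != fset0 -> U != fset0 ->
  exists Z W, [/\ U `<=` Z, U `<=` W,
   (#|` sumset Z W| * #|` A| <= #|` sumset (sumset A B) U| * #|` Z|)%N &
   (#|` sumset Z W| * #|` B| <= #|` sumset (sumset A B) U| * #|` W|)%N].
Proof.
move=> hA hB hU.
have [X [hXA hX0 hX]] := half A B U hA.
have [Y [hYB hY0 hY]] := half B A U hB.
move: hX0 hY0 => /fset0Pn[x0 hx0] /fset0Pn[y0 hy0].
exists (shift (sumset X U) (- x0)), (shift (sumset Y U) (- y0)).
rewrite card_sumset_shift !card_shift; split.
- exact: shift_contain.
- exact: shift_contain.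
- exact: hX.
- by rewrite sumsetC (sumsetC A B); apply: hY.
Qed.
Lemma card_sumset_sub_pad Z Z' W T : Z' `<=` sumset Z T ->
  (#|` sumset Z' W| <= #|` sumset Z W| * #|` T|)%N.
Proof.
move=> h; apply: leq_trans (card_sumset_le (sumset Z W) T).
apply: fsubset_leq_card.
have -> : sumset (sumset Z W) T = sumset (sumset Z T) W.
  by rewrite -sumsetA (sumsetC W) sumsetA.
by apply: sumsetS => //; exact: fsubset_refl.
Qed.

Lemma key2 A B U : A != fset0 -> B != fset0 -> U != fset0 -> #|` A| = #|` B| ->
  (exists F : {fset G}, forall g, g \in F) \/
  exists Z W, [/\ U `<=` Z, U `<=` W, #|` Z| = #|` W| &
   (#|` sumset Z W| * #|` A| <= 2 * #|` sumset (sumset A B) U| * #|` Z|)%N].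
Proof.
move=> hA hB hU hab.
have [Z0 [W0 [hZ hW h1 h2]]] := key12 A B U hA hB hU.
have hZ0 : Z0 != fset0.
  by move: hU => /fset0Pn[u hu]; apply/fset0Pn; exists u; apply: (fsubsetP hZ).
have hW0 : W0 != fset0.
  by move: hU => /fset0Pn[u hu]; apply/fset0Pn; exists u; apply: (fsubsetP hW).
set s := #|` sumset (sumset A B) U| in h1 h2 *.
have [hle|hlt] := leqP #|` Z0| #|` W0|.
  have [F|[T [Z' [hZZ' hZ'T hc hT]]]] := pad Z0 #|` W0| hZ0 hle; first by left.
  right; exists Z', W0; split => //; first exact: fsubset_trans hZZ'.
  have e := card_sumset_sub_pad Z0 Z' W0 T hZ'T.
  rewrite hc; move: e h1 hT.
  set n := #|` sumset Z' W0|; set m := #|` sumset Z0 W0|.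
  set a := #|` A|; set t := #|` T|; set z := #|` Z0|; set w := #|` W0|.
  move=> e h1 hT; nia.
have hle : (#|` W0| <= #|` Z0|)%N by apply: ltnW.
have [F|[T [W' [hWW' hW'T hc hT]]]] := pad W0 #|` Z0| hW0 hle; first by left.
right; exists Z0, W'; split => //; first exact: fsubset_trans hWW'.
have e := card_sumset_sub_pad W0 W' Z0 T hW'T.
rewrite (sumsetC W' Z0) (sumsetC W0 Z0) in e.
rewrite hab; move: e h2 hT.
set n := #|` sumset Z0 W'|; set m := #|` sumset Z0 W0|.
set b := #|` B|; set t := #|` T|; set z := #|` Z0|; set w := #|` W0|.
move=> e h2 hT; nia.
Qed.
Lemma key456 A B U : U `<=` A -> U `<=` B -> U != fset0 -> (#|` B| <= #|` A|)%N ->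
  let s := #|` sumset A B| in let a := #|` A| in let b := #|` B| in
  [/\ exists X, X != fset0 /\
      (#|` sumset (sumset X B) U| * #|` sumset (sumset X B) U| * (a * a) * b
          <= s * s * (s * s) * #|` X|)%N,
      (#|` sumset B B| * a <= s * s)%N &
      (#|` sumset (sumset B B) U| * (a * a) <= s * s * s)%N].
Proof.
move=> hUA hUB hU hba s a b.
have hA : A != fset0.
  by move: hU => /fset0Pn[u hu]; apply/fset0Pn; exists u; apply: (fsubsetP hUA).
have hB : B != fset0.
  by move: hU => /fset0Pn[u hu]; apply/fset0Pn; exists u; apply: (fsubsetP hUB).
have [X [hXA hX0 hr hP]] := petridis_full A B hA.
have x0 : (0 < #|` X|)%N by rewrite cardfs_gt0.
have a0 : (0 < a)%N by rewrite cardfs_gt0.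
have hxa : (#|` X| <= a)%N by apply: fsubset_leq_card.
have hQ := hP B.
have hR := hP (sumset B B).
have hN1 : (#|` sumset (sumset X B) U| <= #|` sumset (sumset X B) B|)%N.
  by apply/fsubset_leq_card/sumsetS => //; exact: fsubset_refl.
have hM : (#|` sumset B B| <= #|` sumset (sumset X B) B|)%N.
  by rewrite -sumsetA; apply: card_sumset_ger.
have hN3 : (#|` sumset (sumset B B) U| <= #|` sumset (sumset X B) (sumset B B)|)%N.
  apply: leq_trans (_ : _ <= #|` sumset (sumset B B) B|)%N _.
    by apply/fsubset_leq_card/sumsetS => //; exact: fsubset_refl.
  by rewrite -[sumset (sumset X B) _]sumsetA (sumsetC B (sumset B B)); apply: card_sumset_ger.
rewrite -/a in hr hxa; rewrite -/s in hr.
set k := #|` sumset X B| in hr hQ hR.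
set Q := #|` sumset (sumset X B) B| in hQ hN1 hM.
rewrite [sumset X (sumset B B)]sumsetA -/Q in hR.
split.
- exists X; split => //.
  apply: (ar4 a0 hxa (hba : (b <= a)%N)).
  apply: ar1 x0 _ hr.
  by apply: leq_trans (hQ); rewrite leq_mul2r hN1 orbT.
- apply: ar6 a0 hxa _; apply: ar1 x0 _ hr.
  by apply: leq_trans (hQ); rewrite leq_mul2r hM orbT.
- apply: ar5 x0 a0 hxa _ hr.
  set R3 := #|` sumset (sumset X B) (sumset B B)| in hR hN3.
  have e1 : (#|` sumset (sumset B B) U| * (#|` X| * #|` X|) <= R3 * #|` X| * #|` X|)%N.
    by rewrite mulnA !leq_mul2r hN3 !orbT.
  apply: (leq_trans e1).
  have e2 := leq_mul hR (leqnn #|` X|).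
  apply: (leq_trans e2).
  have -> : (k * Q * #|` X| = k * (Q * #|` X|))%N by rewrite mulnA.
  by rewrite -mulnA leq_mul2l hQ orbT.
Qed.
Lemma sumset_interchange (P Q R S : {fset G}) :
  sumset (sumset P Q) (sumset R S) = sumset (sumset P R) (sumset Q S).
Proof.
by rewrite -sumsetA [sumset Q (sumset R S)]sumsetA (sumsetC Q R) -sumsetA sumsetA.
Qed.

Lemma key8 A B U : A != fset0 -> B != fset0 -> U != fset0 ->
  (#|` sumset (sumset B B) (sumset U U)| * #|` A| <=
   #|` sumset (sumset A B) U| * #|` sumset (sumset A B) U|)%N.
Proof.
move=> hA hB hU.
have [X [hXA hX0 hr hP]] := petridis_full A (sumset B U) hA.
have x0 : (0 < #|` X|)%N by rewrite cardfs_gt0.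
have a0 : (0 < #|` A|)%N by rewrite cardfs_gt0.
have hxa : (#|` X| <= #|` A|)%N by apply: fsubset_leq_card.
have eq : sumset (sumset B B) (sumset U U) = sumset (sumset B U) (sumset B U).
  exact: sumset_interchange.
have hN : (#|` sumset (sumset B B) (sumset U U)| <=
           #|` sumset (sumset X (sumset B U)) (sumset B U)|)%N.
  by rewrite eq -[sumset (sumset X _) _]sumsetA; apply: card_sumset_ger.
move: hr; rewrite [sumset A (sumset B U)]sumsetA => hr.
apply: ar6 a0 hxa _; apply: ar1 x0 _ hr.
by apply: leq_trans (hP (sumset B U)); rewrite leq_mul2r hN orbT.
Qed.

Lemma key3 A U : A != fset0 -> U != fset0 ->
  exists Z, U `<=` Z /\
   (#|` sumset Z Z| * #|` A| <= #|` sumset (sumset A A) U| * #|` Z|)%N.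
Proof.
move=> hA hU.
have [X [hXA hX0 hX]] := half A A U hA.
move: (hX0) => /fset0Pn[x0 hx0].
exists (shift (sumset X U) (- x0)); split; first exact: shift_contain.
by rewrite card_sumset_shift card_shift; apply: hX.
Qed.

Lemma key7 A U : U != fset0 ->
  (#|` sumset (sumset A A) U| <= #|` sumset (sumset A A) (sumset U U)|)%N.
Proof. by move=> hU; rewrite sumsetA; apply: card_sumset_gel. Qed.

Lemma card_S_ge A B U : B != fset0 -> U != fset0 ->
  (#|` A| <= #|` sumset (sumset A B) U|)%N.
Proof.
move=> hB hU; apply: leq_trans (card_sumset_gel (sumset A B) U hU).
exact: card_sumset_gel.
Qed.

Lemma full_sumset (F : {fset G}) : (forall g, g \in F) -> (#|` sumset F F| <= #|` F|)%N.
Proof. by move=> h; apply: fsubset_leq_card; apply/fsubsetP => x _. Qed.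
End Comb.
Section RealAux.
Variable R : realType.
Local Open Scope ring_scope.
Local Open Scope classical_set_scope.
Implicit Types E : set R.

Lemma inf_le_el E x : (forall y, E y -> 0 <= y) -> E x -> inf E <= x.
Proof. by move=> h Ex; apply: (ge_inf _ Ex); exists 0 => y /h. Qed.

Lemma le_inf_all E c : (exists x, E x) -> (forall y, E y -> c <= y) -> c <= inf E.
Proof. by move=> [x Ex] h; apply: lb_le_inf => //; exists x. Qed.

Lemma inf_ge0 E : (exists x, E x) -> (forall y, E y -> 0 <= y) -> 0 <= inf E.
Proof. exact: le_inf_all. Qed.

Lemma lift_pow2 E c : (exists x, E x) -> (forall y, E y -> 0 <= y) ->
  (forall y, E y -> c <= y ^+ 2) -> c <= (inf E) ^+ 2.
Proof.
move=> hne h0 hc; have i0 := inf_ge0 E hne h0; set i := inf E in i0 *.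
apply/ler_addgt0Pr => e e0.
set M := 2 * i + 1.
have M0 : 0 < M by rewrite /M; lra.
set d := e / (M + e).
have d0 : 0 < d by rewrite /d divr_gt0 //; lra.
have d1 : d <= 1 by rewrite /d ler_pdivrMr; lra.
have dM : d * M <= e.
  rewrite /d mulrAC ler_pdivrMr; last by lra.
  by rewrite ler_pM2l //; lra.
have hinf : has_inf E by split; [case: hne => x ?; exists x | exists 0 => y /h0].
have [y Ey hy] := inf_adherent d0 hinf.
have y0 := h0 y Ey; have := hc y Ey; rewrite -/i in hy.
move=> cy.
have h1 : y ^+ 2 <= (i + d) ^+ 2.
  by rewrite ler_pXn2r // ?nnegrE //; [lra | lra].
have h2 : (i + d) ^+ 2 <= i ^+ 2 + d * M.
  rewrite /M; nra.
lra.
Qed.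

Lemma lift_pow3 E c : (exists x, E x) -> (forall y, E y -> 0 <= y) ->
  (forall y, E y -> c <= y ^+ 3) -> c <= (inf E) ^+ 3.
Proof.
move=> hne h0 hc; have i0 := inf_ge0 E hne h0; set i := inf E in i0 *.
apply/ler_addgt0Pr => e e0.
set M := 3 * i ^+ 2 + 3 * i + 1.
have M0 : 0 < M by rewrite /M; nra.
set d := e / (M + e).
have d0 : 0 < d by rewrite /d divr_gt0 //; lra.
have d1 : d <= 1 by rewrite /d ler_pdivrMr; lra.
have dM : d * M <= e.
  rewrite /d mulrAC ler_pdivrMr; last by lra.
  by rewrite ler_pM2l //; lra.
have hinf : has_inf E by split; [case: hne => x ?; exists x | exists 0 => y /h0].
have [y Ey hy] := inf_adherent d0 hinf.
have y0 := h0 y Ey; have := hc y Ey; rewrite -/i in hy.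
move=> cy.
have h1 : y ^+ 3 <= (i + d) ^+ 3.
  by rewrite ler_pXn2r // ?nnegrE //; [lra | lra].
have h2 : (i + d) ^+ 3 <= i ^+ 3 + d * M.
  have hd2 : d * d <= d by nra.
  have hd3 : d * d * d <= d by nra.
  have hi : i * (d * d) <= i * d by apply: ler_wpM2l.
  have -> : (i + d) ^+ 3 = i ^+ 3 + 3 * i ^+ 2 * d + 3 * (i * (d * d)) + d * d * d.
    by ring.
  rewrite /M; lra.
lra.
Qed.

Lemma frac_le (p q p' q' : nat) : (0 < q)%N -> (0 < q')%N ->
  (p * q' <= p' * q)%N -> p%:R / q%:R <= p'%:R / q'%:R :> R.
Proof.
move=> q0 q0' h.
rewrite ler_pdivrMr ?ltr0n // mulrAC ler_pdivlMr ?ltr0n //.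
by rewrite -!natrM ler_nat.
Qed.

Definition rt (p q : nat) : R := p%:R / Num.sqrt q%:R.

Lemma rt_ge0 p q : 0 <= rt p q.
Proof. by rewrite /rt divr_ge0 // sqrtr_ge0. Qed.

Lemma rt_sq p q : (rt p q) ^+ 2 = (p * p)%:R / q%:R.
Proof. by rewrite /rt expr_div_n sqr_sqrtr // natrM expr2. Qed.

Lemma rt_le p q p' q' : (0 < q)%N -> (0 < q')%N ->
  (p * p * q' <= p' * p' * q)%N -> rt p q <= rt p' q'.
Proof.
move=> q0 q0' h.
rewrite -(ler_pXn2r (_ : (0 < 2)%N)) ?nnegrE ?rt_ge0 //.
by rewrite !rt_sq; apply: frac_le.
Qed.

Lemma le_sq (x y : R) : 0 <= x -> 0 <= y -> x ^+ 2 <= y ^+ 2 -> x <= y.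
Proof. by move=> x0 y0; rewrite ler_pXn2r ?nnegrE. Qed.

End RealAux.
Section Main.
Variables (R : realType) (G : zmodType).
Local Open Scope ring_scope.
Local Open Scope classical_set_scope.
Implicit Types A B Z W V : {fset G}.

Lemma sub_neq0 (U Z : {fset G}) : U != fset0 -> (U `<=` Z)%fset -> Z != fset0.
Proof.
by move=> /fset0Pn[u hu] h; apply/fset0Pn; exists u; apply: (fsubsetP h).
Qed.

Lemma cardR_ratio A B :
  cardR R A * cardR R B = (#|` A| * #|` B|)%:R.
Proof. by rewrite /cardR natrM. Qed.

Lemma alpha_el U A B : A != fset0 -> B != fset0 -> (U `<=` A)%fset -> (U `<=` B)%fset ->
  alpha R U <= rt R #|` sumset A B| (#|` A| * #|` B|).
Proof.
move=> hA hB hUA hUB; apply: inf_le_el.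
  by move=> y [A' [B' [_ _ _ _ ->]]]; rewrite divr_ge0 ?sqrtr_ge0.
by exists A, B; split => //; rewrite cardR_ratio.
Qed.

Lemma alpha'_el U Z W : Z != fset0 -> W != fset0 -> (U `<=` Z)%fset -> (U `<=` W)%fset ->
  #|` Z| = #|` W| ->
  alpha' R U <= (#|` sumset Z W|)%:R / (#|` Z|)%:R.
Proof.
move=> hZ hW hUZ hUW e; apply: inf_le_el.
  by move=> y [A' [B' [_ _ _ _ [_ ->]]]]; rewrite divr_ge0.
by exists Z, W; split.
Qed.

Lemma alpha''_el U Z : Z != fset0 -> (U `<=` Z)%fset ->
  alpha'' R U <= (#|` sumset Z Z|)%:R / (#|` Z|)%:R.
Proof.
move=> hZ hUZ; apply: inf_le_el.
  by move=> y [A' [_ _ ->]]; rewrite divr_ge0.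
by exists Z; split.
Qed.

Lemma beta_el U A B : A != fset0 -> B != fset0 ->
  beta R U <= rt R #|` sumset (sumset A B) U| (#|` A| * #|` B|).
Proof.
move=> hA hB; apply: inf_le_el.
  by move=> y [A' [B' [_ _ ->]]]; rewrite divr_ge0 ?sqrtr_ge0.
by exists A, B; split => //; rewrite cardR_ratio.
Qed.

Lemma beta''_el U A : A != fset0 ->
  beta'' R U <= (#|` sumset (sumset A A) U|)%:R / (#|` A|)%:R.
Proof.
move=> hA; apply: inf_le_el.
  by move=> y [A' [_ ->]]; rewrite divr_ge0.
by exists A; split.
Qed.

Lemma sqrt_nn (n : nat) : Num.sqrt ((n * n)%:R : R) = n%:R.
Proof. by rewrite natrM -expr2 sqrtr_sqr ger0_norm. Qed.

Lemma sqfrac (p q : nat) : ((p%:R / q%:R : R)) ^+ 2 = (p * p)%:R / (q * q)%:R.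
Proof. by rewrite expr_div_n !natrM !expr2. Qed.

Lemma frac_ge0 (p q : nat) : 0 <= (p%:R / q%:R : R).
Proof. by rewrite divr_ge0. Qed.
End Main.
Arguments sub_neq0 {G U Z}.
Arguments alpha_el {R G U A B}.
Arguments alpha'_el {R G U Z W}.
Arguments alpha''_el {R G U Z}.
Arguments beta_el {R G} U {A B}.
Arguments beta''_el {R G} U {A}.
Arguments rt_le {R p q p' q'}.
Arguments frac_le {R p q p' q'}.
Arguments le_sq {R x y}.
Arguments lift_pow2 {R E c}.
Arguments lift_pow3 {R E c}.
Arguments le_inf_all {R E c}.
Arguments inf_le_el {R E x}.
Arguments inf_ge0 {R E}.
Section Claims.
Variables (R : realType) (G : zmodType) (U : {fset G}) (hU : U != fset0).
Local Open Scope ring_scope.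
Local Open Scope classical_set_scope.

Lemma mul2_le {N a b s z w : nat} : (N * a <= s * z)%N -> (N * b <= s * w)%N ->
  (N * N * (a * b) <= s * s * (z * w))%N.
Proof.
move=> h1 h2; have := leq_mul h1 h2.
have -> : (N * a * (N * b) = N * N * (a * b))%N by ring.
by have -> : (s * z * (s * w) = s * s * (z * w))%N by ring.
Qed.

Lemma claim1 : alpha R U <= beta R U.
Proof.
rewrite /beta; apply: le_inf_all.
  by exists (cardR R (sumset (sumset U U) U) / Num.sqrt (cardR R U * cardR R U));
     exists U, U; split.
move=> y [A [B [hA hB ->]]].
have [Z [W [hZ hW h1 h2]]] := key12 G A B U hA hB hU.
apply: le_trans (alpha_el (sub_neq0 hU hZ) (sub_neq0 hU hW) hZ hW) _.
rewrite cardR_ratio; apply: rt_le.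
- by rewrite muln_gt0 !cardfs_gt0 (sub_neq0 hU hZ) (sub_neq0 hU hW).
- by rewrite muln_gt0 !cardfs_gt0 hA hB.
exact: mul2_le h1 h2.
Qed.

Lemma claim2 : alpha' R U <= 4 * beta' R U.
Proof.
have a0 : 0 <= alpha' R U.
  apply: inf_ge0; first by exists (cardR R (sumset U U) / cardR R U); exists U, U; split.
  by move=> y [A' [B' [_ _ _ _ [_ ->]]]]; rewrite divr_ge0.
rewrite -ler_pdivrMl; last by [].
rewrite /beta'; apply: le_inf_all.
  by exists (cardR R (sumset (sumset U U) U) / Num.sqrt (cardR R U * cardR R U));
     exists U, U; split.
move=> y [A [B [hA hB hab ->]]].
rewrite cardR_ratio -hab sqrt_nn /cardR.
have hy : 0 <= (#|` sumset (sumset A B) U|)%:R / (#|` A|)%:R :> R by rewrite divr_ge0.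
have n0 : (0 < #|` A|)%N by rewrite cardfs_gt0.
have [[F hF]|[Z [W [hZ hW hzw h]]]] := key2 G A B U hA hB hU hab.
  have hUF : (U `<=` F)%fset by apply/fsubsetP => x _; apply: hF.
  have hF0 := sub_neq0 hU hUF.
  have h1 := alpha'_el (R:=R) hF0 hF0 hUF hUF erefl.
  have h2 : (#|` sumset F F|)%:R / (#|` F|)%:R <= (1%N)%:R / (1%N)%:R :> R.
    by apply: frac_le; rewrite ?cardfs_gt0 // muln1 mul1n full_sumset.
  have h3 : (1%N)%:R / (1%N)%:R <= (#|` sumset (sumset A B) U|)%:R / (#|` A|)%:R :> R.
    by apply: frac_le => //; rewrite muln1 mul1n card_S_ge.
  rewrite divr1 in h2 h3.
  lra.
have hZ0 := sub_neq0 hU hZ; have hW0 := sub_neq0 hU hW.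
have h1 := alpha'_el (R:=R) hZ0 hW0 hZ hW hzw.
have h2 : (#|` sumset Z W|)%:R / (#|` Z|)%:R <=
          (2 * #|` sumset (sumset A B) U|)%:R / (#|` A|)%:R :> R.
  by apply: frac_le; rewrite ?cardfs_gt0 // mulnA.
rewrite natrM -mulrA in h2.
lra.
Qed.

Lemma claim3 : alpha'' R U <= 3 * beta'' R U.
Proof.
have a0 : 0 <= alpha'' R U.
  apply: inf_ge0; first by exists (cardR R (sumset U U) / cardR R U); exists U; split.
  by move=> y [A' [_ _ ->]]; rewrite divr_ge0.
rewrite -ler_pdivrMl; last by [].
rewrite /beta''; apply: le_inf_all.
  by exists (cardR R (sumset (sumset U U) U) / cardR R U); exists U; split.
move=> y [A [hA ->]].
have [Z [hZ h]] := key3 G A U hA hU.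
have hZ0 := sub_neq0 hU hZ.
have h1 := alpha''_el (R:=R) hZ0 hZ.
have h2 : (#|` sumset Z Z|)%:R / (#|` Z|)%:R <=
          (#|` sumset (sumset A A) U|)%:R / (#|` A|)%:R :> R.
  by apply: frac_le; rewrite ?cardfs_gt0.
rewrite /cardR.
lra.
Qed.

Lemma case4 A B : (U `<=` A)%fset -> (U `<=` B)%fset -> (#|` B| <= #|` A|)%N ->
  beta R U <= (rt R #|` sumset A B| (#|` A| * #|` B|)) ^+ 2.
Proof.
move=> hUA hUB hba.
have hA := sub_neq0 hU hUA; have hB := sub_neq0 hU hUB.
have [[X [hX0 hi]] _ _] := key456 G A B U hUA hUB hU hba.
apply: le_trans (beta_el (R:=R) U hX0 hB) _.
apply: le_sq; rewrite ?rt_ge0 ?exprn_ge0 ?rt_ge0 //.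
rewrite rt_sq -exprM (mulnC 2 2) exprM rt_sq sqfrac.
apply: frac_le.
- by rewrite !muln_gt0 !cardfs_gt0 hX0 hB.
- by rewrite !muln_gt0 !cardfs_gt0 hA hB.
move: hi; set N := #|` _|; set s := #|` sumset A B|.
set a := #|` A|; set b := #|` B|; set x := #|` X| => hi.
have := leq_mul hi (leqnn b).
have -> : (N * N * (a * a) * b * b = N * N * (a * b * (a * b)))%N by ring.
by have -> : (s * s * (s * s) * x * b = s * s * (s * s) * (x * b))%N by ring.
Qed.

Lemma case6 A B : (U `<=` A)%fset -> (U `<=` B)%fset -> (#|` B| <= #|` A|)%N ->
  alpha'' R U <= (rt R #|` sumset A B| (#|` A| * #|` B|)) ^+ 2.
Proof.
move=> hUA hUB hba.
have hA := sub_neq0 hU hUA; have hB := sub_neq0 hU hUB.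
have [_ hii _] := key456 G A B U hUA hUB hU hba.
apply: le_trans (alpha''_el (R:=R) hB hUB) _.
rewrite rt_sq; apply: frac_le.
- by rewrite !cardfs_gt0.
- by rewrite !muln_gt0 !cardfs_gt0 hA hB.
move: hii; set M := #|` _|; set s := #|` sumset A B|.
set a := #|` A|; set b := #|` B| => hii.
have := leq_mul hii (leqnn b).
by have -> : (M * (a * b) = M * a * b)%N by ring.
Qed.

Lemma case5 A B : (U `<=` A)%fset -> (U `<=` B)%fset -> (#|` B| <= #|` A|)%N ->
  beta'' R U <= (rt R #|` sumset A B| (#|` A| * #|` B|)) ^+ 3.
Proof.
move=> hUA hUB hba.
have hA := sub_neq0 hU hUA; have hB := sub_neq0 hU hUB.
have [_ _ hiii] := key456 G A B U hUA hUB hU hba.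
apply: le_trans (beta''_el (R:=R) U hB) _.
apply: le_sq; rewrite ?frac_ge0 ?exprn_ge0 ?rt_ge0 //.
rewrite sqfrac -exprM (mulnC 3 2) exprM rt_sq expr_div_n -!natrX.
apply: frac_le.
- by rewrite !muln_gt0 !cardfs_gt0 hB.
- by rewrite expn_gt0 !muln_gt0 !cardfs_gt0 hA hB.
move: hiii; set N := #|` _|; set s := #|` sumset A B|.
set a := #|` A|; set b := #|` B| => hiii.
have e1 : (N * N * (a * b) ^ 3 <= N * N * (a * a * a * a) * (b * b))%N.
  have -> : (N * N * (a * b) ^ 3 = N * N * (a * a * a) * (b * b) * b)%N by ring.
  have -> : (N * N * (a * a * a * a) * (b * b) = N * N * (a * a * a) * (b * b) * a)%N.
    by ring.
  by rewrite leq_mul2l hba orbT.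
have e2 : (N * N * (a * a * a * a) * (b * b) <= s * s * s * (s * s * s) * (b * b))%N.
  have := leq_mul (leq_mul hiii hiii) (leqnn (b * b)).
  by have -> : (N * (a * a) * (N * (a * a)) * (b * b) = N * N * (a * a * a * a) * (b * b))%N by ring.
apply: (leq_trans e1); apply: (leq_trans e2).
by have -> : (s * s * s * (s * s * s) * (b * b) = (s * s) ^ 3 * (b * b))%N by ring.
Qed.

Lemma claim4 : beta R U <= alpha R U ^+ 2.
Proof.
rewrite /alpha; apply: lift_pow2.
- by exists (cardR R (sumset U U) / Num.sqrt (cardR R U * cardR R U)); exists U, U; split.
- by move=> y [A' [B' [_ _ _ _ ->]]]; rewrite divr_ge0 ?sqrtr_ge0.
move=> y [A [B [hA hB hUA hUB ->]]]; rewrite cardR_ratio.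
have [hba|hab] := leqP #|` B| #|` A|; first exact: case4.
by rewrite sumsetC mulnC; apply: case4 => //; apply: ltnW.
Qed.

Lemma claim5 : beta'' R U <= alpha R U ^+ 3.
Proof.
rewrite /alpha; apply: lift_pow3.
- by exists (cardR R (sumset U U) / Num.sqrt (cardR R U * cardR R U)); exists U, U; split.
- by move=> y [A' [B' [_ _ _ _ ->]]]; rewrite divr_ge0 ?sqrtr_ge0.
move=> y [A [B [hA hB hUA hUB ->]]]; rewrite cardR_ratio.
have [hba|hab] := leqP #|` B| #|` A|; first exact: case5.
by rewrite sumsetC mulnC; apply: case5 => //; apply: ltnW.
Qed.

Lemma claim6 : alpha'' R U <= alpha R U ^+ 2.
Proof.
rewrite [alpha R U]/alpha; apply: lift_pow2.
- by exists (cardR R (sumset U U) / Num.sqrt (cardR R U * cardR R U)); exists U, U; split.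
- by move=> y [A' [B' [_ _ _ _ ->]]]; rewrite divr_ge0 ?sqrtr_ge0.
move=> y [A [B [hA hB hUA hUB ->]]]; rewrite cardR_ratio.
have [hba|hab] := leqP #|` B| #|` A|; first exact: case6.
by rewrite sumsetC mulnC; apply: case6 => //; apply: ltnW.
Qed.

Lemma claim7 : beta'' R U <= beta'' R (sumset U U).
Proof.
rewrite [beta'' R (sumset U U)]/beta''; apply: le_inf_all.
  by exists (cardR R (sumset (sumset U U) (sumset U U)) / cardR R U); exists U; split.
move=> y [A [hA ->]].
apply: le_trans (beta''_el (R:=R) U hA) _.
by apply: frac_le; rewrite ?cardfs_gt0 //; apply: leq_mul => //; apply: key7.
Qed.

Lemma claim8 : beta'' R (sumset U U) <= beta R U ^+ 2.
Proof.
rewrite [beta R U]/beta; apply: lift_pow2.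
- by exists (cardR R (sumset (sumset U U) U) / Num.sqrt (cardR R U * cardR R U));
     exists U, U; split.
- by move=> y [A' [B' [_ _ ->]]]; rewrite divr_ge0 ?sqrtr_ge0.
move=> y [A [B [hA hB ->]]]; rewrite cardR_ratio.
apply: le_trans (beta''_el (R:=R) (sumset U U) hB) _.
rewrite -/(rt R _ _) rt_sq; apply: frac_le.
- by rewrite cardfs_gt0.
- by rewrite muln_gt0 !cardfs_gt0 hA hB.
have := leq_mul (key8 G A B U hA hB hU) (leqnn #|` B|).
by have -> : (forall N a b : nat, N * (a * b) = N * a * b)%N by move=> *; ring.
Qed.
End Claims.

Theorem mainTheorem16 (R : realType) (G : zmodType) (U : {fset G})
    (hU : U != fset0) :
  [/\ alpha R U <= beta R U,
      alpha' R U <= 4 * beta' R U,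
      alpha'' R U <= 3 * beta'' R U &
      beta R U <= alpha R U ^+ 2] /\
  [/\ beta'' R U <= alpha R U ^+ 3,
      alpha'' R U <= alpha R U ^+ 2,
      beta'' R U <= beta'' R (sumset U U) &
      beta'' R (sumset U U) <= beta R U ^+ 2].
Proof.
split; split.
- by apply: claim1.
- by apply: claim2.
- by apply: claim3.
- by apply: claim4.
- by apply: claim5.
- by apply: claim6.
- by apply: claim7.
- by apply: claim8.
Qed.
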